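(* Let $\Omega$ be any set of $q$ elements, where $q$ is a power of two and $q \ge 8$. Then there exists a nice pair of permutations for $\Omega$.
   Context: For a permutation $\sigma$ of a $q$-element set $\Omega$ and $0 \le i < q$, $\sigma(i)$ denotes the element in position $i$. Given two permutations $\sigma_1,\sigma_2$ of $\Omega$, form the $2\times q$ array whose first row is $\sigma_1(0),\ldots,\sigma_1(q-1)$ and whose second row is $\sigma_2(0),\ldots,\sigma_2(q-1)$. Each $a\in\Omega$ occurs once in each row. If $a=\sigma_1(i)$, its first-row neighbors are $l_1=\sigma_1(i-1 \bmod q)$, $r_1=\sigma_1(i+1 \bmod q)$ and the down-neighbor $d=\sigma_2(i)$. If $a=\sigma_2(j)$, its second-row neighbors are $l_2=\sigma_2(j-1\bmod q)$, $r_2=\sigma_2(j+1 \bmod q)$ and the up-neighbor $u=\sigma_1(j)$. The pair $(\sigma_1,\sigma_2)$ is called a nice pair if for every $a\in\Omega$ the six elements $l_1,r_1,d,l_2,r_2,u$ are pairwise distinct. *)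

(* Defs.v *)
From mathcomp Require Import all_boot.
Set Implicit Arguments. Unset Strict Implicit. Unset Printing Implicit Defensive.

(* A permutation sigma of a q-element set Omega (a finType with #|Omega| = q)
   is a bijection sigma : 'I_q -> Omega; sigma i is the element in position i.
   Positions are taken mod q: ord_pred i = i-1 mod q, ordS i = i+1 mod q. *)
Definition is_perm_arr (Omega : finType) (q : nat) (s : 'I_q -> Omega) : Prop :=
  bijective s.

Definition nice_pair (Omega : finType) (q : nat) (s1 s2 : 'I_q -> Omega) : Prop :=
  forall (a : Omega) (i j : 'I_q), s1 i = a -> s2 j = a ->
    uniq [:: s1 (ord_pred i); s1 (ordS i); s2 i;
             s2 (ord_pred j); s2 (ordS j); s1 j].

(* Main.v *)
Require Import Defs.
From mathcomp Require Import all_boot.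
From mathcomp Require Import zify.

Lemma res_pred x y t : 0 < t -> y %% 8 = x %% 8 -> ((y + t*8).-1) %% 8 = (x+7)%%8.
Proof. lia. Qed.

Lemma res_uniq (r : nat) : r < 8 ->
  uniq [:: (5*r+1)%%8; (5*r+3)%%8; (r+4)%%8; (5*r+5)%%8;(5*r+7)%%8; r].
Proof. by do 8! case: r => [|r] //. Qed.

Section Main.
Variables (q : nat) (Hq8 : 8 %| q) (Hcop : coprime q 5) (Hq : 0 < q).

Lemma qpos : 0 < q.
Proof. exact: Hq. Qed.

Definition g (i : 'I_q) : 'I_q := Ordinal (ltn_pmod (5 * i + 2) qpos).

Lemma g_inj : injective g.
Proof.
have key : forall a b : 'I_q, b <= a -> g a = g b -> a = b.
  move=> a b ba /(congr1 val) /= /eqP H.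
  rewrite eqn_mod_dvd in H; last by lia.
  have E : 5 * a + 2 - (5 * b + 2) = 5 * (a - b) by lia.
  rewrite E Gauss_dvdr // in H.
  have ab : a - b < q by have := ltn_ord a; lia.
  have : a - b = 0.
    case E2: (a - b) H => [//|n] H; have := dvdn_leq (ltn0Sn n) H; lia.
  by move=> h; apply: ord_inj; lia.
move=> a b; case: (leqP b a) => ab; first exact: key.
by move=> h; symmetry; apply: key; [exact: ltnW | symmetry].
Qed.

Lemma key_uniq (j : 'I_q) :
  uniq [:: ord_pred (g j); ordS (g j); g (g j); g (ord_pred j); g (ordS j); j].
Proof.
apply: (map_uniq (f := fun x : 'I_q => val x %% 8)).
have m8 : forall x, x %% q %% 8 = x %% 8 := fun x => modn_dvdm x Hq8.
case/dvdnP: Hq8 => t qt.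
have t0 : 0 < t by move: Hq; rewrite qt; lia.
rewrite /= !m8.
set J := nat_of_ord j.
have ha : (5 * J + 2) %% q %% 8 = (5 * J + 2) %% 8 := m8 _.
have hb : (J + q).-1 %% q %% 8 = (J + q).-1 %% 8 := m8 _.
have hc : J.+1 %% q %% 8 = J.+1 %% 8 := m8 _.
move: ha hb hc.
set a := (5 * J + 2) %% q. set b := (J + q).-1 %% q. set c := J.+1 %% q.
move=> ha hb hc.
clearbody a b c J.
have E1 : (a + q).-1 %% 8 = (5 * (J %% 8) + 1) %% 8 by rewrite qt; lia.
have E2 : a.+1 %% 8 = (5 * (J %% 8) + 3) %% 8 by lia.
have E3 : (5 * a + 2) %% 8 = (J %% 8 + 4) %% 8 by lia.
have E4 : (5 * b + 2) %% 8 = (5 * (J %% 8) + 5) %% 8 by rewrite qt in hb; lia.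
have E5 : (5 * c + 2) %% 8 = (5 * (J %% 8) + 7) %% 8 by lia.
rewrite E1 E2 E3 E4 E5; apply: res_uniq; exact: ltn_pmod.
Qed.
End Main.

Theorem lemma2 (Omega : finType) (q : nat) (k : nat) :
  #|Omega| = q -> q = 2 ^ k -> 8 <= q ->
  exists (s1 s2 : 'I_q -> Omega),
    is_perm_arr s1 /\ is_perm_arr s2 /\ nice_pair s1 s2.
Proof.
move=> HO Hk H8.
have k3 : 3 <= k.
  rewrite leqNgt; apply/negP => k2; move: H8; rewrite Hk.
  by case: k Hk k2 => [|[|[|]]].
have Hq8 : 8 %| q by rewrite Hk (_ : 8 = 2 ^ 3) // dvdn_exp2l.
have Hcop : coprime q 5 by rewrite Hk coprimeXl.
have Hq : 0 < q by lia.
pose e (i : 'I_q) : Omega := enum_val (cast_ord (esym HO) i).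
have e_inj : injective e.
  by move=> x y /enum_val_inj /cast_ord_inj.
have e_bij : bijective e by apply: inj_card_bij => //; rewrite card_ord HO.
exists e, (fun x => e (g q Hq x)); split; first exact: e_bij.
split.
  apply: inj_card_bij; last by rewrite card_ord HO.
  by move=> x y /e_inj /(@g_inj q Hq8 Hcop Hq).
move=> a i j <- /e_inj <-.
have := @key_uniq q Hq8 Hcop Hq j.
by rewrite -(map_inj_uniq e_inj).
Qed.
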